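(* There exists an absolute constant $C_1$ such that, with $\beta=C_1dH\sqrt{\iota}$ and $\iota=\log(4\log(|\mathcal A|)dT/p)$, the following holds for the algorithm below (run with $\lambda=1$ and $\alpha=\frac{\log(|\mathcal A|)K}{2(1+\xi+H)}$). For any fixed policy $\pi$, on the event $\mathcal E$ defined below, for all $(x,a)$, $k\in[K]$, $h\in[H]$ and $j\in\{r,g\}$, $$\langle\phi(x,a),w^k_{j,h}\rangle-Q^\pi_{j,h}(x,a)=\mathbb P_h(V^k_{j,h+1}-V^\pi_{j,h+1})(x,a)+\Delta^k_h(x,a)$$ for some $\Delta^k_h(x,a)$ with $|\Delta^k_h(x,a)|\le\beta\sqrt{\phi(x,a)^\top(\Lambda^k_h)^{-1}\phi(x,a)}$.
   Context: Setting. Consider an episodic constrained MDP with: - a measurable state space $\mathcal S$ and a finite action set $\mathcal A$ with $|\mathcal A|\ge 2$; - horizon $H$ and transition kernels $\mathbb P_h(\cdot|x,a)$; - deterministic reward and utility functions $r_h,g_h:\mathcal S\times\mathcal A\to[0,1]$, with $r_{H+1}=g_{H+1}=0$; - a fixed initial state $x_1$. For a policy $\pi$ and $j\in\{r,g\}$, $V^\pi_{j,h}(x)=\mathbb E_\pi[\sum_{i=h}^Hj_i(x_i,a_i)\mid x_h=x]$ and $Q^\pi_{j,h}(x,a)=\mathbb E_\pi[\sum_{i=h}^Hj_i(x_i,a_i)\mid x_h=x,a_h=a]$, with $V^\pi_{j,H+1}=0$. Write $\mathbb P_hV(x,a)=\mathbb E_{x'\sim\mathbb P_h(\cdot|x,a)}V(x')$.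 Linear MDP assumption: there are - a known feature map $\phi$ into $\mathbb R^d$ with $\|\phi\|_2\le1$; - signed measures $\mu_h=(\mu^1_h,\ldots,\mu^d_h)$; - vectors $\theta_{j,h}$ with $\|\theta_{j,h}\|_2\le\sqrt d$; such that $\mathbb P_h(dx'|x,a)=\langle\phi(x,a),\mu_h(dx')\rangle$ and $j_h=\langle\phi,\theta_{j,h}\rangle$. Moreover $\|\int f\,d\mu_h\|_2\le\sqrt d\sup|f|$. Constraint threshold $b\in(0,H]$. Slater's condition: there exist $\gamma>0$ and $\bar\pi$ with $V^{\bar\pi}_{g,1}(x_1)\ge b+\gamma$. Set $\xi=2H/\gamma$. Algorithm (number of episodes $K$, $T=KH$, parameters $\lambda,\beta,\alpha,\eta>0$). Set $Y_1=0$. In episode $k$: 1. Set $V^k_{j,H+1}=0$. 2. For $h=H,\dots,1$ compute: - $\Lambda^k_h=\sum_{\tau<k}\phi(x^\tau_h,a^\tau_h)\phi(x^\tau_h,a^\tau_h)^\top+\lambda I$; - $w^k_{j,h}=(\Lambda^k_h)^{-1}\sum_{\tau<k}\phi(x^\tau_h,a^\tau_h)[j_h(x^\tau_h,a^\tau_h)+V^k_{j,h+1}(x^\tau_{h+1})]$; - $Q^k_{j,h}(x,a)=\min\{\langle w^k_{j,h},\phi(x,a)\rangle+\beta\sqrt{\phi(x,a)^\top(\Lambda^k_h)^{-1}\phi(x,a)},H\}$; - $\pi_{h,k}(a|x)\propto\exp(\alpha(Q^k_{r,h}(x,a)+Y_kQ^k_{g,h}(x,a)))$; - $V^k_{j,h}(x)=\sum_a\pi_{h,k}(a|x)Q^k_{j,h}(x,a)$.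 3. Execute $\pi_k$ from $x_1$ to obtain $(x^k_h,a^k_h)_h$. 4. Update $Y_{k+1}=\max\{\min\{Y_k+\eta(b-V^k_{g,1}(x_1)),\xi\},0\}$. The event $\mathcal E$: for all $k,h,j$, $$\|\sum_{\tau=1}^{k-1}\phi(x^\tau_h,a^\tau_h)[V^k_{j,h+1}(x^\tau_{h+1})-\mathbb P_hV^k_{j,h+1}(x^\tau_h,a^\tau_h)]\|_{(\Lambda^k_h)^{-1}}\le C_2dH\sqrt{\chi},$$ where $\chi=\log[4(C_1+1)\log(|\mathcal A|)dT/p]$, $C_2$ is a fixed constant, and $\|v\|_M=\sqrt{v^\top Mv}$. *)

(* Defs.v *)
From HB Require Import structures.
From mathcomp Require Import all_boot all_order all_algebra.
From mathcomp Require Import all_classical all_reals all_analysis.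
Set Implicit Arguments. Unset Strict Implicit. Unset Printing Implicit Defensive.
Import Order.TTheory GRing.Theory Num.Theory.
Local Open Scope ring_scope.

Section LinearCMDP.
Context {R : realType} {dS : measure_display} {S : measurableType dS}
  {A : finType} {dim : nat}.

Definition dotv (u v : 'cV[R]_dim) : R := (u^T *m v) 0 0.
Definition normv (u : 'cV[R]_dim) : R := Num.sqrt (dotv u u).
Definition mxnorm (M : 'M[R]_dim) (v : 'cV[R]_dim) : R :=
  Num.sqrt ((v^T *m M *m v) 0 0).

(** Transition kernels P_h(.|x,a), h = 1..H. *)
Definition kernel_t := nat -> S -> A -> probability S R.

Definition PV (P : kernel_t) (h : nat) (V : S -> R) (x : S) (a : A) : R :=
  fine (\int[P h x a]_y (V y)%:E)%E.

(** A vector of finite signed measures mu_h = (mu_h^1,...,mu_h^dim), each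
    mu_h^i given by its decomposition mu_h^i = mup h i - mun h i as a
    difference of two finite measures. *)
Definition fmeas_t := nat -> 'I_dim -> {finite_measure set S -> \bar R}.

Definition smeas (mup mun : fmeas_t) (h : nat) (i : 'I_dim) (B : set S) : R :=
  fine (mup h i B) - fine (mun h i B).

Definition sint (mup mun : fmeas_t) (h : nat) (f : S -> R) : 'cV[R]_dim :=
  \col_i (fine (\int[mup h i]_y (f y)%:E)%E - fine (\int[mun h i]_y (f y)%:E)%E).

Definition is_policy (H : nat) (pi : nat -> S -> A -> R) : Prop :=
  forall h, (1 <= h <= H)%N ->
    [/\ (forall x a, 0 <= pi h x a),
        (forall x, \sum_a pi h x a = 1) &
        (forall a, measurable_fun setT (fun x => pi h x a))].

(** Vpol_aux m h = value at step h with m remaining steps. *)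
Fixpoint Vpol_aux (P : kernel_t) (pi : nat -> S -> A -> R)
    (j : nat -> S -> A -> R) (m h : nat) : S -> R :=
  match m with
  | 0 => fun _ => 0
  | m'.+1 => fun x =>
      \sum_a pi h x a * (j h x a + PV P h (Vpol_aux P pi j m' h.+1) x a)
  end.

Definition Vpol P pi j (H h : nat) : S -> R := Vpol_aux P pi j (H.+1 - h) h.
Definition Qpol P pi j (H h : nat) (x : S) (a : A) : R :=
  j h x a + PV P h (Vpol P pi j H h.+1) x a.

Section Algorithm.
Variables (phi : S -> A -> 'cV[R]_dim)
  (rw ut : nat -> S -> A -> R)
  (H : nat) (lam beta alpha eta b xi : R) (x1 : S)
  (xs : nat -> nat -> S) (acts : nat -> nat -> A).
(* xs tau h = x^tau_h, acts tau h = a^tau_h : observed data of episode tau. *)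

Definition feat (tau h : nat) : 'cV[R]_dim := phi (xs tau h) (acts tau h).

Definition Lam (k h : nat) : 'M[R]_dim :=
  \sum_(1 <= tau < k) (feat tau h *m (feat tau h)^T) + lam%:M.

(** w^k_{j,h} computed from the next-step estimate Vn = V^k_{j,h+1}. *)
Definition wvec (j : nat -> S -> A -> R) (k h : nat) (Vn : S -> R)
  : 'cV[R]_dim :=
  invmx (Lam k h) *m
    \sum_(1 <= tau < k)
       ((j h (xs tau h) (acts tau h) + Vn (xs tau h.+1)) *: feat tau h).

Definition bonus (k h : nat) (x : S) (a : A) : R :=
  mxnorm (invmx (Lam k h)) (phi x a).

Definition Qalg j (k h : nat) (Vn : S -> R) (x : S) (a : A) : R :=
  Num.min (dotv (wvec j k h Vn) (phi x a) + beta * bonus k h x a) H%:R.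

Definition softmax (Y : R) (Qr Qg : S -> A -> R) (x : S) (a : A) : R :=
  expR (alpha * (Qr x a + Y * Qg x a)) /
  \sum_b expR (alpha * (Qr x b + Y * Qg x b)).

(** (V^k_{r,h}, V^k_{g,h}) with m = H+1-h remaining steps, for dual var Y. *)
Fixpoint algV_aux (k : nat) (Y : R) (m h : nat) : (S -> R) * (S -> R) :=
  match m with
  | 0 => (fun _ => 0, fun _ => 0)
  | m'.+1 =>
      let Vn := algV_aux k Y m' h.+1 in
      let Qr := Qalg rw k h Vn.1 in
      let Qg := Qalg ut k h Vn.2 in
      let pol := softmax Y Qr Qg in
      (fun x => \sum_a pol x a * Qr x a, fun x => \sum_a pol x a * Qg x a)
  end.

Definition algV (k : nat) (Y : R) (h : nat) := algV_aux k Y (H.+1 - h) h.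

(** Yseq n = Y_{n+1}:  Y_1 = 0,
    Y_{k+1} = max(min(Y_k + eta (b - V^k_{g,1}(x1)), xi), 0). *)
Fixpoint Yseq (n : nat) : R :=
  match n with
  | 0 => 0
  | n'.+1 =>
      Num.max (Num.min (Yseq n' + eta * (b - (algV n'.+1 (Yseq n') 1).2 x1)) xi) 0
  end.

Definition jfun (jr : bool) : nat -> S -> A -> R := if jr then rw else ut.

(** V^k_{j,h} (episode k uses Y_k = Yseq k.-1) *)
Definition Vk (k h : nat) (jr : bool) : S -> R :=
  let V := algV k (Yseq k.-1) h in if jr then V.1 else V.2.

Definition wk (k h : nat) (jr : bool) : 'cV[R]_dim :=
  wvec (jfun jr) k h (Vk k h.+1 jr).

Definition event_E (P : kernel_t) (K : nat) (bound : R) : Prop :=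
  forall k h (jr : bool), (1 <= k <= K)%N -> (1 <= h <= H)%N ->
    mxnorm (invmx (Lam k h))
      (\sum_(1 <= tau < k)
         ((Vk k h.+1 jr (xs tau h.+1)
           - PV P h (Vk k h.+1 jr) (xs tau h) (acts tau h)) *: feat tau h))
    <= bound.

End Algorithm.
End LinearCMDP.

(* Main.v *)
Require Import Defs.
From HB Require Import structures.
From mathcomp Require Import all_boot all_order all_algebra.
From mathcomp Require Import all_classical all_reals all_analysis.
Import Order.TTheory GRing.Theory Num.Theory.
Local Open Scope ring_scope.
From mathcomp Require Import measurable_realfun.
From mathcomp Require Import ring lra zify.

Section MX.
Context {R : realType} {n : nat}.
Implicit Types (u v f : 'cV[R]_n) (M G : 'M[R]_n).

Definition qf M v : R := (v^T *m M *m v) 0 0.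

Lemma dotvE u v : dotv u v = \sum_i u i 0 * v i 0.
Proof. by rewrite /dotv mxE; apply: eq_bigr => i _; rewrite mxE. Qed.

Lemma dotvC u v : dotv u v = dotv v u.
Proof. by rewrite !dotvE; apply: eq_bigr => i _; rewrite mulrC. Qed.

Lemma dotvDr u v w : dotv u (v + w) = dotv u v + dotv u w.
Proof. by rewrite /dotv mulmxDr mxE. Qed.

Lemma dotvBr u v w : dotv u (v - w) = dotv u v - dotv u w.
Proof. by rewrite /dotv mulmxBr !mxE. Qed.

Lemma dotvZr u v (c : R) : dotv u (c *: v) = c * dotv u v.
Proof. rewrite /dotv -scalemxAr. rewrite !mxE. done. Qed.

Lemma dotv_sumr u I (r : seq I) (P : pred I) (F : I -> 'cV[R]_n) :
  dotv u (\sum_(i <- r | P i) F i) = \sum_(i <- r | P i) dotv u (F i).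
Proof. by rewrite /dotv mulmx_sumr summxE. Qed.

Lemma dotv_ge0 v : 0 <= dotv v v.
Proof. by rewrite dotvE sumr_ge0 // => i _; rewrite -expr2 sqr_ge0. Qed.

Lemma dotv_eq0 v : dotv v v = 0 -> v = 0.
Proof.
rewrite dotvE => /psumr_eq0P H0; apply/matrixP => i j.
have {}H0 := H0 (fun i _ => ltac:(by rewrite -expr2 sqr_ge0)). 
rewrite (ord1 j) mxE; have := H0 i isT. 
by move/eqP; rewrite -expr2 sqrf_eq0 => /eqP.
Qed.

Lemma qfE M v : qf M v = dotv v (M *m v).
Proof. by rewrite /qf /dotv mulmxA. Qed.

Lemma qf1 v : qf 1%:M v = dotv v v.
Proof. by rewrite qfE mul1mx. Qed.

Lemma qfD M G v : qf (M + G) v = qf M v + qf G v.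
Proof. by rewrite /qf mulmxDr mulmxDl mxE. Qed.

Lemma qf_sum I (r : seq I) (P : pred I) (F : I -> 'M[R]_n) v :
  qf (\sum_(i <- r | P i) F i) v = \sum_(i <- r | P i) qf (F i) v.
Proof. by rewrite /qf mulmx_sumr mulmx_suml summxE. Qed.

Lemma mul11 (A : 'M[R]_(1,1)) m (B : 'M[R]_(1,m)) j : (A *m B) 0 j = A 0 0 * B 0 j.
Proof. by rewrite mxE big_ord1. Qed.

Lemma dotv_trC u v : (v^T *m u) 0 0 = (u^T *m v) 0 0.
Proof. by rewrite -/(dotv v u) -/(dotv u v) dotvC. Qed.

Lemma qf_outer f v : qf (f *m f^T) v = (dotv f v) ^+ 2.
Proof.
rewrite /qf !mulmxA -(mulmxA (v^T *m f)) mul11 -/(dotv v f) -/(dotv f v) dotvC.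
by rewrite expr2.
Qed.

Lemma bilin_sym M u v : M^T = M -> (v^T *m M *m u) 0 0 = (u^T *m M *m v) 0 0.
Proof.
move=> sM; have -> : (v^T *m M *m u) 0 0 = ((v^T *m M *m u)^T) 0 0 by rewrite [RHS]mxE.
by rewrite !trmx_mul trmxK sM mulmxA.
Qed.

Lemma disc (a b c : R) : 0 <= c ->
  (forall t, 0 <= a + 2 * t * b + t ^+ 2 * c) -> b ^+ 2 <= a * c.
Proof.
move=> c0 Ht; have a0 : 0 <= a by have := Ht 0; rewrite mulr0 mul0r expr0n /= mul0r !addr0.
have [cz|cp] := eqVneq c 0.
  subst c; rewrite mulr0; have [bz|bn] := eqVneq b 0; first by rewrite bz expr0n.
  have := Ht (- (a + 1) / (2 * b)); rewrite mulr0 addr0.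
  have -> : 2 * (-(a+1)/(2*b)) * b = -(a+1) by field; rewrite bn.
  lra.
have cpos : 0 < c by rewrite lt_def cp c0.
have := Ht (- b / c); rewrite -(@ler_pM2r _ c) // mul0r.
have -> : (a + 2 * (- b / c) * b + (- b / c) ^+ 2 * c) * c = a * c - b ^+ 2.
  by field; rewrite cp.
by rewrite subr_ge0.
Qed.

Lemma cauchy_schwarz M u v : M^T = M -> (forall w, 0 <= qf M w) ->
  ((u^T *m M *m v) 0 0) ^+ 2 <= qf M u * qf M v.
Proof.
move=> sM psd; apply: disc => // t.
have := psd (u + t *: v); rewrite /qf.
have trD (x y : 'cV[R]_n) : (x + y)^T = x^T + y^T by apply/matrixP => i j; rewrite !mxE.
have trZ (x : 'cV[R]_n) (c : R) : (c *: x)^T = c *: x^T by apply/matrixP => i j; rewrite !mxE.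
rewrite trD trZ mulmxDl mulmxDl mulmxDr mulmxDr -!scalemxAl -?scalemxAr.
have aE (A B : 'M[R]_(1,1)) : (A + B) 0 0 = A 0 0 + B 0 0 by rewrite mxE.
have sE (A : 'M[R]_(1,1)) c : (c *: A) 0 0 = c * A 0 0 by rewrite mxE.
rewrite !aE !sE (bilin_sym M u v sM) => h; apply: le_trans h _; rewrite le_eqVlt; apply/orP; left; apply/eqP.
ring.
Qed.

Lemma mxnorm_ge0 M v : 0 <= mxnorm M v.
Proof. exact: sqrtr_ge0. Qed.

Lemma cs_abs M u v : M^T = M -> (forall w, 0 <= qf M w) ->
  `|dotv u (M *m v)| <= mxnorm M u * mxnorm M v.
Proof.
move=> sM psd; rewrite /mxnorm -sqrtrM ?psd // -(sqrtr_sqr (dotv _ _)).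
by rewrite ler_sqrt ?mulr_ge0 ?psd // /dotv mulmxA; apply: cauchy_schwarz.
Qed.

Lemma trmxDsq (A B : 'M[R]_n) : (A + B)^T = A^T + B^T.
Proof. by apply/matrixP => i j; rewrite !mxE. Qed.

Lemma qf_mulmx M G v : qf (M *m G) v = ((M^T *m v)^T *m (G *m v)) 0 0.
Proof. by rewrite /qf trmx_mul trmxK !mulmxA. Qed.

Lemma col_mul11 f (u : 'M[R]_(1,1)) : f *m u = (u 0 0) *: f.
Proof.
apply/matrixP => i j; rewrite (ord1 j) [LHS]mxE big_ord1 mulrC [RHS]mxE.
by [].
Qed.

Lemma trmx_sum I (r : seq I) (Pr : pred I) (X : I -> 'M[R]_n) :
  (\sum_(i <- r | Pr i) X i)^T = \sum_(i <- r | Pr i) (X i)^T.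
Proof.
apply/matrixP => i j; rewrite mxE !summxE; apply: eq_bigr => k _; by rewrite mxE.
Qed.

Lemma outer_sym f : (f *m f^T)^T = f *m f^T.
Proof. by rewrite trmx_mul trmxK. Qed.

Lemma sum_outer_sym I (r : seq I) (Pr : pred I) (F : I -> 'cV[R]_n) :
  (\sum_(i <- r | Pr i) F i *m (F i)^T)^T = \sum_(i <- r | Pr i) F i *m (F i)^T.
Proof. by rewrite trmx_sum; apply: eq_bigr => i _; rewrite outer_sym. Qed.

Lemma sum_outer_psd I (r : seq I) (Pr : pred I) (F : I -> 'cV[R]_n) v :
  0 <= qf (\sum_(i <- r | Pr i) F i *m (F i)^T) v.
Proof. by rewrite qf_sum sumr_ge0 // => i _; rewrite qf_outer sqr_ge0. Qed.

Lemma normv_ge0 v : 0 <= normv v.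
Proof. exact: sqrtr_ge0. Qed.

Section Lam.
Variable G : 'M[R]_n.
Hypothesis sG : G^T = G.
Hypothesis pG : forall v, 0 <= qf G v.
Let L := G + 1%:M.

Lemma Lsym : L^T = L.
Proof. by rewrite /L trmxDsq sG trmx1. Qed.

Lemma qfL_ge v : dotv v v <= qf L v.
Proof. by rewrite /L qfD qf1 lerDr. Qed.

Lemma L_unit : L \in unitmx.
Proof.
rewrite -row_free_unit; apply: inj_row_free => v hv.
have hc : L *m v^T = 0 by rewrite -Lsym -trmx_mul hv trmx0.
have : qf L v^T = 0 by rewrite qfE hc /dotv mulmx0 mxE.
move=> h0; have := qfL_ge v^T; rewrite h0 => hle.
have : dotv v^T v^T = 0 by apply/eqP; rewrite eq_le hle dotv_ge0.
by move/dotv_eq0 => /(congr1 trmx); rewrite trmxK trmx0.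
Qed.

Let M := invmx L.

Lemma Msym : M^T = M.
Proof. by rewrite /M trmx_inv Lsym. Qed.

Lemma qfM_eq w : qf M w = qf L (M *m w).
Proof.
have uL := L_unit.
by rewrite /qf trmx_mul Msym mulmxA -(mulmxA (w^T *m M) L) mulmxV // mulmx1.
Qed.

Lemma qfM_ge0 w : 0 <= qf M w.
Proof. by rewrite qfM_eq; apply: le_trans (qfL_ge _); apply: dotv_ge0. Qed.

Lemma qfM_le w : qf M w <= dotv w w.
Proof.
have uL := L_unit.
set z := M *m w.
have wz : w = L *m z by rewrite /z mulKVmx.
have e1 : dotv w w = qf (L *m L) z.
  by rewrite qf_mulmx Lsym -wz.
have e2 : L *m L = G *m G + G + G + 1%:M.
  by rewrite /L mulmxDl !mulmxDr !mul1mx !mulmx1 !addrA.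
have e3 : qf (G *m G) z = dotv (G *m z) (G *m z) by rewrite qf_mulmx sG.
rewrite e1 e2 !qfD e3 qfM_eq -/z /L qfD.
have := dotv_ge0 (G *m z); have := pG z; lra.
Qed.

Lemma mxnormM_le w : mxnorm M w <= normv w.
Proof. by rewrite /mxnorm /normv ler_sqrt ?dotv_ge0 // -/(qf M w) qfM_le. Qed.

End Lam.
End MX.


Section INT.
Context {R : realType} {dS : measure_display} {S : measurableType dS}.
Local Notation meas := {measure set S -> \bar R}.

Definition madd (m1 m2 : meas) : meas := measure_add m1 m2.
Definition mlist (l : seq meas) : meas := foldr madd mzero l.

Lemma mlistE l B : mlist l B = (\sum_(m <- l) m B)%E.
Proof.
elim: l => [|m l IH] /=; first by rewrite big_nil.
by rewrite big_cons -IH; exact: measure_addE.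
Qed.

Lemma int_mlist (l : seq meas) (g : S -> \bar R) : (forall x, 0 <= g x)%E -> measurable_fun setT g ->
  (\int[mlist l]_x g x = \sum_(m <- l) \int[m]_x g x)%E.
Proof.
move=> g0 mg; elim: l => [|m l IH] /=.
  by rewrite big_nil integral_measure_zero.
by rewrite /madd ge0_integral_measure_add // IH big_cons.
Qed.


Definition finm (m : meas) := forall B, measurable B -> m B \is a fin_num.

Definition Ig (m : meas) (g : S -> R) : R := fine (\int[m]_x (g x)%:E)%E.

Lemma bounded_of (g : S -> R) (Bd : R) : (forall x, `|g x| <= Bd) -> [bounded g x | x in setT].
Proof.
move=> hb; exists Bd; split; first exact: num_real.
by move=> M BM x _; apply: le_trans (hb x) (ltW BM).
Qed.

Lemma int_fin {m : meas} (hm : finm m) {g : S -> R} {Bd : R} :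
  measurable_fun setT g -> (forall x, `|g x| <= Bd) ->
  m.-integrable setT (EFin \o g) /\ (\int[m]_x (g x)%:E = (Ig m g)%:E)%E.
Proof.
move=> mg hb.
have mT : (m setT < +oo)%E.
  by have := hm setT measurableT; rewrite fin_numElt => /andP[].
have ig : m.-integrable setT (EFin \o g).
  exact: (@measurable_bounded_integrable _ _ _ m g setT measurableT mT mg (@bounded_of g Bd hb)).
split => //; rewrite /Ig fineK //.
exact: (integrable_fin_num measurableT ig).
Qed.

Lemma finm_scale (c : {nonneg R}) (m : meas) : finm m -> finm (mscale c m).
Proof. by move=> hm B mB; rewrite /mscale /= fin_numM // hm. Qed.

Lemma max0_ge0 (x : R) : 0 <= Num.max x 0.
Proof. by rewrite le_max lexx orbT. Qed.

Definition nn (x : R) : {nonneg R} := NngNum (max0_ge0 x).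

Lemma cpn (x : R) : Num.max x 0 - Num.max (- x) 0 = x.
Proof.
rewrite !maxr_absE !subr0 normrN; set a := `|x|; lra.
Qed.

Definition msc (c : R) (m : meas) : meas := mscale (nn c) m.
Arguments msc : simpl never.

Lemma mscaleE (c : R) {m : meas} (hm : finm m) B : measurable B ->
  msc c m B = (Num.max c 0 * fine (m B))%:E.
Proof. by move=> mB; rewrite /mscale /= EFinM fineK // hm. Qed.

Lemma msc_sum {T0 : Type} (r : seq T0) (f : T0 -> R) (m : T0 -> meas) B :
  (forall i, finm (m i)) -> measurable B ->
  (\sum_(i <- r) msc (f i) (m i) B = (\sum_(i <- r) Num.max (f i) 0 * fine (m i B))%:E)%E.
Proof.
move=> hm mB; rewrite -sumEFin; apply: eq_bigr => i _; exact: mscaleE.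
Qed.

Lemma int_mscale (c : R) {m : meas} (hm : finm m) {g : S -> R} {Bd : R} :
  measurable_fun setT g -> (forall x, 0 <= g x) -> (forall x, `|g x| <= Bd) ->
  (\int[msc c m]_x (g x)%:E = (Num.max c 0 * Ig m g)%:E)%E.
Proof.
move=> mg g0 hb; rewrite ge0_integral_mscale //; last first.
  by move=> x _; rewrite lee_fin.
  exact/measurable_EFinP.
by have [_ ->] := int_fin hm mg hb.
Qed.

Lemma int_msc_sum {T0 : Type} (r : seq T0) (f : T0 -> R) (m : T0 -> meas) (g : S -> R) (Bd : R) :
  (forall i, finm (m i)) ->
  measurable_fun setT g -> (forall x, 0 <= g x) -> (forall x, `|g x| <= Bd) ->
  (\sum_(i <- r) \int[msc (f i) (m i)]_x (g x)%:E = (\sum_(i <- r) Num.max (f i) 0 * Ig (m i) g)%:E)%E.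
Proof.
move=> hm mg g0 hb; rewrite -sumEFin; apply: eq_bigr => i _; exact: int_mscale.
Qed.

Lemma Ig_cst {m : meas} (hm : finm m) (Bd : R) : Ig m (fun _ => Bd) = Bd * fine (m setT).
Proof.
rewrite /Ig (integral_cst m measurableT (Bd%:E)) -{1}(fineK (hm setT measurableT)).
by rewrite -EFinM.
Qed.

Lemma Ig_shift {m : meas} (hm : finm m) (f : S -> R) (Bd : R) :
  measurable_fun setT f -> (forall x, `|f x| <= Bd) ->
  Ig m f = Ig m (fun x => f x + Bd) - Bd * fine (m setT).
Proof.
move=> mf hb.
have Bd0 : 0 <= Bd by apply: le_trans (hb (point : S)); rewrite normr_ge0.
have mg : measurable_fun setT (fun x => f x + Bd).
  by apply: measurable_funD => //; exact: measurable_cst.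
have hbg : forall x, `|f x + Bd| <= Bd + Bd.
  by move=> x; apply: le_trans (ler_normD _ _) _; rewrite lerD // ger0_norm.
have mc : measurable_fun setT (fun _ : S => Bd) by exact: measurable_cst.
have hbc : forall x : S, `|Bd| <= `|Bd| by [].
have [ig eg] := int_fin hm mg hbg.
have [ic ec] := int_fin hm mc hbc.
rewrite -Ig_cst //.
have -> : Ig m f = fine (\int[m]_x ((f x + Bd)%:E - Bd%:E))%E.
  by rewrite /Ig; congr fine; apply: eq_integral => x _; rewrite -EFinB addrK.
by rewrite (integralB_EFin measurableT ig ic) eg ec.
Qed.

Lemma Ig_sub {m : meas} (hm : finm m) (f g : S -> R) (B1 B2 : R) :
  measurable_fun setT f -> (forall x, `|f x| <= B1) ->
  measurable_fun setT g -> (forall x, `|g x| <= B2) ->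
  Ig m (fun x => f x - g x) = Ig m f - Ig m g.
Proof.
move=> mf hf mg hg.
have [i1 e1] := int_fin hm mf hf.
have [i2 e2] := int_fin hm mg hg.
rewrite {1}/Ig.
under eq_integral do rewrite EFinB.
by rewrite (integralB_EFin measurableT i1 i2) e1 e2.
Qed.

Lemma Ig_ge0 (m : meas) (g : S -> R) : (forall x, 0 <= g x) -> 0 <= Ig m g.
Proof. by move=> g0; apply: fine_ge0; apply: integral_ge0 => x _; rewrite lee_fin. Qed.

Opaque msc.
Section Ident.
Variables (dim : nat) (P : meas) (mup mun : 'I_dim -> meas) (c : 'I_dim -> R).
Hypotheses (hP : finm P) (hup : forall i, finm (mup i)) (hun : forall i, finm (mun i)).
Hypothesis hPB : forall B, measurable B ->
  P B = (\sum_i c i * (fine (mup i B) - fine (mun i B)))%:E.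

Let l1 := P :: [seq msc (- c i) (mup i) | i <- index_enum 'I_dim] ++
                [seq msc (c i) (mun i) | i <- index_enum 'I_dim].
Let l2 := [seq msc (c i) (mup i) | i <- index_enum 'I_dim] ++
          [seq msc (- c i) (mun i) | i <- index_enum 'I_dim].

Lemma l12 B : measurable B -> mlist l1 B = mlist l2 B.
Proof.
move=> mB; rewrite !mlistE /l1 /l2 big_cons !big_cat !big_map /=.
rewrite hPB //.
rewrite !msc_sum // -!EFinD; congr EFin.
rewrite -!big_split /=; apply: eq_bigr => i _.
have := cpn (c i); move: (Num.max (c i) 0) (Num.max (- c i) 0) => p q <-.
ring.
Qed.

Lemma ident_ge0 (g : S -> R) (Bd : R) : measurable_fun setT g -> (forall x, 0 <= g x) ->
  (forall x, `|g x| <= Bd) ->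
  Ig P g = \sum_i c i * (Ig (mup i) g - Ig (mun i) g).
Proof.
move=> mg g0 hb.
have e := eq_measure_integral (mlist l2) (D := setT) (m1 := mlist l1) (f := fun x => (g x)%:E)
  (fun B mB _ => l12 B mB).
have g0' : forall x, (0 <= (g x)%:E)%E by move=> x; rewrite lee_fin.
have mg' : measurable_fun setT (fun x => (g x)%:E) by exact/measurable_EFinP.
move: e; rewrite !int_mlist // /l1 /l2 big_cons !big_cat !big_map /=.
have [_ ->] := int_fin hP mg hb.
have E1 := int_msc_sum (index_enum 'I_dim) (fun j => - c j) mup g Bd hup mg g0 hb.
have E2 := int_msc_sum (index_enum 'I_dim) (fun j => c j) mun g Bd hun mg g0 hb.
have E3 := int_msc_sum (index_enum 'I_dim) (fun j => c j) mup g Bd hup mg g0 hb.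
have E4 := int_msc_sum (index_enum 'I_dim) (fun j => - c j) mun g Bd hun mg g0 hb.
rewrite E1 E2 E3 E4.
rewrite -[X in _ = X]EFinD -[X in (_ + X)%E]EFinD -EFinD => ee0; have ee := EFin_inj ee0; clear ee0.
have -> : \sum_i c i * (Ig (mup i) g - Ig (mun i) g) =
  (\sum_i Num.max (c i) 0 * Ig (mup i) g + \sum_i Num.max (- c i) 0 * Ig (mun i) g) -
  (\sum_i Num.max (- c i) 0 * Ig (mup i) g + \sum_i Num.max (c i) 0 * Ig (mun i) g).
  rewrite -!big_split -sumrB; apply: eq_bigr => i _ /=.
  have := cpn (c i); move: (Num.max (c i) 0) (Num.max (- c i) 0) => p q <-.
  ring.
move: ee; set a1 := Ig P g; set a2 := \sum_i _; set a3 := \sum_i _; set a4 := \sum_i _; set a5 := \sum_i _.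
lra.
Qed.

Lemma ident (f : S -> R) (Bd : R) : measurable_fun setT f ->
  (forall x, `|f x| <= Bd) ->
  Ig P f = \sum_i c i * (Ig (mup i) f - Ig (mun i) f).
Proof.
move=> mf hb.
have Bd0 : 0 <= Bd by apply: le_trans (hb (point : S)); rewrite normr_ge0.
have mg : measurable_fun setT (fun x => f x + Bd).
  by apply: measurable_funD => //; exact: measurable_cst.
have g0 : forall x, 0 <= f x + Bd.
  move=> x; have := hb x; rewrite ler_norml => /andP[h1 _]; lra.
have hbg : forall x, `|f x + Bd| <= Bd + Bd.
  by move=> x; apply: le_trans (ler_normD _ _) _; rewrite lerD // ger0_norm.
rewrite (Ig_shift hP _ _ mf hb) (ident_ge0 _ _ mg g0 hbg).
have hT := hPB setT measurableT.
rewrite hT /=.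
under [in RHS]eq_bigr do rewrite (Ig_shift (hup _) _ _ mf hb) (Ig_shift (hun _) _ _ mf hb).
rewrite mulr_sumr -sumrB; apply: eq_bigr => i _; ring.
Qed.

End Ident.
End INT.


Section Const.
Context {R : realType}.

Lemma ln_le_sub1 (x : R) : 0 < x -> ln x <= x - 1.
Proof.
move=> x0; have := expR_ge1Dx (ln x); rewrite lnK ?posrE //; lra.
Qed.

Lemma ln2_ge : 1/2 <= ln (2:R).
Proof.
have := expR_ge1Dx (- ln (2:R)); rewrite expRN lnK ?posrE //.
lra.
Qed.

Lemma sqrt_le_of (a b : R) : 0 <= b -> a <= b ^+ 2 -> Num.sqrt a <= b.
Proof.
move=> b0 h; rewrite -(ger0_norm b0) -sqrtr_sqr ler_sqrt //; exact: sqr_ge0.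
Qed.

Lemma le_sqrt_of (a b : R) : 0 <= a -> a ^+ 2 <= b -> a <= Num.sqrt b.
Proof.
move=> a0 h; rewrite -(ger0_norm a0) -sqrtr_sqr ler_sqrt //.
by apply: le_trans h; exact: sqr_ge0.
Qed.

Lemma const_bound (C2 X d Hn : R) : 0 < C2 -> 2 <= X -> 1 <= d -> 1 <= Hn ->
  C2 * d * Hn * Num.sqrt (ln ((((2 * C2 + 3) ^+ 2) + 1) * X)) + Num.sqrt d * (1 + Hn)
  <= ((2 * C2 + 3) ^+ 2) * d * Hn * Num.sqrt (ln X).
Proof.
move=> hC2 hX hd hH.
set u := 2 * C2 + 3.
have u1 : 3 <= u by rewrite /u; lra.
set io := ln X.
have io12 : 1/2 <= io.
  apply: le_trans ln2_ge _; rewrite ler_ln ?posrE //; lra.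
have hsplit : ln ((u ^+ 2 + 1) * X) = ln (u ^+ 2 + 1) + io.
  by rewrite lnM // posrE; [rewrite ltr_pwDr ?sqr_ge0 | lra].
have hlnC : ln (u ^+ 2 + 1) <= u ^+ 2.
  have hp : 0 < u ^+ 2 + 1 by rewrite ltr_pwDr ?sqr_ge0.
  by apply: le_trans (ln_le_sub1 (u ^+ 2 + 1) hp) _; lra.
have hchi : ln ((u ^+ 2 + 1) * X) <= (2 * u * Num.sqrt io) ^+ 2.
  have -> : (2 * u * Num.sqrt io) ^+ 2 = 4 * u ^+ 2 * io.
    by rewrite exprMn sqr_sqrtr; [ring | lra].
  rewrite hsplit.
  have U9 : 9 <= u ^+ 2.
    have h3 : (0:R) <= 3 by lra.
    by rewrite expr2; have := ler_pM h3 h3 u1 u1; lra.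
  have : 9 * (4 * io - 1) <= u ^+ 2 * (4 * io - 1) by rewrite ler_wpM2r //; lra.
  lra.
have s0 : 0 <= Num.sqrt io by rewrite sqrtr_ge0.
have hs1 : Num.sqrt (ln ((u ^+ 2 + 1) * X)) <= 2 * u * Num.sqrt io.
  apply: sqrt_le_of => //; rewrite !mulr_ge0 //; lra.
have hs23 : 2/3 <= Num.sqrt io.
  apply: le_sqrt_of; lra.
have hsd : Num.sqrt d <= d.
  apply: sqrt_le_of; [lra|]; rewrite expr2; nra.
have hsd0 : 0 <= Num.sqrt d by rewrite sqrtr_ge0.
have A1 : C2 * d * Hn * Num.sqrt (ln ((u ^+ 2 + 1) * X)) <= C2 * d * Hn * (2 * u * Num.sqrt io).
  apply: ler_wpM2l => //; rewrite !mulr_ge0 //; lra.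
have A2 : Num.sqrt d * (1 + Hn) <= d * Hn * (3 * Num.sqrt io).
  have dH : 0 <= d * Hn by rewrite mulr_ge0 //; lra.
  apply: le_trans (_ : (d * Hn) * 2 <= _).
    have -> : d * Hn * 2 = d * (2 * Hn) by ring.
    apply: ler_pM => //; lra.
  apply: ler_wpM2l => //; lra.
apply: le_trans (lerD A1 A2) _.
set s := Num.sqrt io.
have dH : 0 <= d * Hn by rewrite mulr_ge0 //; lra.
have : C2 * d * Hn * (2 * u * s) + d * Hn * (3 * s) = (d * Hn) * s * (2 * C2 * u + 3) by ring.
move=> ->.
have -> : u ^+ 2 * d * Hn * s = (d * Hn) * s * (u * u) by rewrite expr2; ring.
apply: ler_wpM2l; first by rewrite mulr_ge0.
rewrite {2}/u; nra.
Qed.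

End Const.


Section Main.
Context {R : realType} {dS : measure_display} {S : measurableType dS} {A : finType} {dim : nat}.
Variables (H K : nat) (phi : S -> A -> 'cV[R]_dim) (P : @kernel_t R dS S A)
  (mup mun : @fmeas_t R dS S dim) (rw ut : nat -> S -> A -> R) (x1 : S)
  (beta alpha eta b xi : R) (xs : nat -> nat -> S) (acts : nat -> nat -> A) (Eb : R).
Hypothesis hmeas : forall a (i : 'I_dim), measurable_fun setT (fun x => phi x a i 0).
Hypothesis hPl : forall h, (1 <= h <= H)%N -> forall x a (B : set S), measurable B ->
     P h x a B = (dotv (phi x a) (\col_i smeas mup mun h i B))%:E.
Hypothesis hsint : forall h, (1 <= h <= H)%N -> forall (f : S -> R) (M : R),
     measurable_fun setT f -> (forall y, `|f y| <= M) ->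
     normv (sint mup mun h f) <= Num.sqrt dim%:R * M.

Lemma finP h x a : finm (P h x a).
Proof. by move=> B mB; apply: fin_num_measure. Qed.

Lemma finup h i : finm (mup h i).
Proof. by move=> B mB; apply: fin_num_measure. Qed.

Lemma finun h i : finm (mun h i).
Proof. by move=> B mB; apply: fin_num_measure. Qed.

Lemma PV_ident h (hh : (1 <= h <= H)%N) (f : S -> R) (Bd : R) :
  measurable_fun setT f -> (forall y, `|f y| <= Bd) ->
  forall x a, PV P h f x a = dotv (phi x a) (sint mup mun h f).
Proof.
move=> mf hb x a.
change (Ig (P h x a) f = dotv (phi x a) (sint mup mun h f)).
rewrite (ident dim (P h x a) (mup h) (mun h) (fun i => phi x a i 0) (finP h x a)
   (finup h) (finun h) _ f Bd mf hb).
  by rewrite dotvE; apply: eq_bigr => i _; rewrite mxE.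
move=> B mB; etransitivity; first exact: (hPl h hh x a B mB).
rewrite dotvE; congr EFin; apply: eq_bigr => i _.
by rewrite mxE.
Qed.

Hypothesis hth : forall h, (1 <= h <= H)%N -> exists th tg : 'cV[R]_dim,
     [/\ normv th <= Num.sqrt dim%:R, normv tg <= Num.sqrt dim%:R &
         forall x a, rw h x a = dotv (phi x a) th /\ ut h x a = dotv (phi x a) tg].
Hypothesis hE : event_E phi rw ut H 1 beta alpha eta b xi x1 xs acts P K Eb.
Hypothesis hbeta : Eb + Num.sqrt dim%:R * (1 + H%:R) <= beta.

Local Notation Vk' := (Vk phi rw ut H 1 beta alpha eta b xi x1 xs acts).
Local Notation wk' := (wk phi rw ut H 1 beta alpha eta b xi x1 xs acts).

Lemma core k h jr : (1 <= k <= K)%N -> (1 <= h <= H)%N ->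
  measurable_fun setT (Vk' k h.+1 jr) -> (forall y, `|Vk' k h.+1 jr y| <= H%:R) ->
  forall x a, exists Delta,
    dotv (phi x a) (wk' k h jr) = jfun rw ut jr h x a + PV P h (Vk' k h.+1 jr) x a + Delta
    /\ `|Delta| <= beta * bonus phi 1 xs acts k h x a.
Proof.
move=> hk hh mV bV x a.
set Vn := Vk' k h.+1 jr.
have [th [tg [nth ntg hlin]]] := hth h hh.
have [t [jlin nt]] : exists t : 'cV[R]_dim, (forall y a', jfun rw ut jr h y a' = dotv (phi y a') t)
    /\ normv t <= Num.sqrt dim%:R.
  exists (if jr then th else tg); split; last by case: (jr).
  by move=> y a'; rewrite /jfun; case: (jr); have [] := hlin y a'.
set s := sint mup mun h Vn.
have hs : forall y a', PV P h Vn y a' = dotv (phi y a') s.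
  by move=> y a'; exact: (PV_ident h hh Vn H%:R mV bV y a').
have ns : normv s <= Num.sqrt dim%:R * H%:R by apply: hsint.
set F := fun tau => feat phi xs acts tau h.
set G := \sum_(1 <= tau < k) F tau *m (F tau)^T.
have sG : G^T = G by rewrite /G sum_outer_sym.
have pG : forall v, 0 <= qf G v by move=> v; rewrite /G sum_outer_psd.
have LE : Lam phi 1 xs acts k h = G + 1%:M by [].
set M := invmx (Lam phi 1 xs acts k h).
have uL := L_unit G sG pG.
have sM : M^T = M by rewrite /M LE; exact: Msym G sG.
have pM : forall w, 0 <= qf M w by move=> w; rewrite /M LE; exact: qfM_ge0 G sG pG w.
have nM : forall w, mxnorm M w <= normv w by move=> w; rewrite /M LE; exact: mxnormM_le G sG pG w.
set E := \sum_(1 <= tau < k) ((Vn (xs tau h.+1) - PV P h Vn (xs tau h) (acts tau h)) *: F tau).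
have hEb : mxnorm M E <= Eb by exact: (hE k h jr hk hh).
have key : \sum_(1 <= tau < k) ((jfun rw ut jr h (xs tau h) (acts tau h) + Vn (xs tau h.+1)) *: F tau)
    = G *m (t + s) + E.
  rewrite /G mulmx_suml /E -big_split /=; apply: eq_bigr => tau _.
  rewrite -mulmxA col_mul11 -/(dotv (F tau) (t + s)) dotvDr.
  rewrite jlin hs -scalerDl; congr (_ *: _); rewrite /F /feat; ring.
have wE : wk' k h jr = (t + s) - M *m (t + s) + M *m E.
  rewrite /wk /wvec -/Vn -/M key mulmxDr; congr (_ + _).
  have -> : G = Lam phi 1 xs acts k h - 1%:M by rewrite LE addrK.
  rewrite mulmxA mulmxBr /M mulVmx; last by rewrite LE.
  by rewrite mulmx1 mulmxBl mul1mx.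
exists (dotv (phi x a) (M *m E) - dotv (phi x a) (M *m t) - dotv (phi x a) (M *m s)).
split.
  rewrite wE dotvDr dotvBr dotvDr jlin hs mulmxDr dotvDr; ring.
set bo := bonus phi 1 xs acts k h x a.
have bo0 : 0 <= bo by exact: mxnorm_ge0.
have c1 := cs_abs M (phi x a) E sM pM.
have c2 := cs_abs M (phi x a) t sM pM.
have c3 := cs_abs M (phi x a) s sM pM.
rewrite -/bo in c1 c2 c3.
have d1 : bo * mxnorm M E <= bo * Eb by apply: ler_wpM2l.
have d2 : bo * mxnorm M t <= bo * Num.sqrt dim%:R by apply: ler_wpM2l => //; apply: le_trans (nM t) nt.
have d3 : bo * mxnorm M s <= bo * (Num.sqrt dim%:R * H%:R) by apply: ler_wpM2l => //; apply: le_trans (nM s) ns.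
have d4 : bo * (Eb + Num.sqrt dim%:R * (1 + H%:R)) <= bo * beta by apply: ler_wpM2l.
apply: le_trans (ler_normB _ _) _.
apply: le_trans (lerD (ler_normB _ _) (lexx _)) _.
rewrite (mulrC beta).
apply: le_trans (lerD (lerD c1 c2) c3) _.
apply: le_trans (lerD (lerD d1 d2) d3) _.
rewrite -!mulrDr; apply: ler_wpM2l => //.
move: hbeta; rewrite mulrDr mulr1; lra.
Qed.

Lemma meas_dotphi (w : 'cV[R]_dim) a : measurable_fun setT (fun x => dotv w (phi x a)).
Proof.
have -> : (fun x => dotv w (phi x a)) = (fun x => \sum_i (w i 0 * phi x a i 0)).
  by apply/funext => x; rewrite dotvE.
apply: measurable_sum => i; apply: measurable_funM => //; exact: measurable_cst.
Qed.

Lemma qf_sumE (M : 'M[R]_dim) (v : 'cV[R]_dim) :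
  qf M v = \sum_j (\sum_i v i 0 * M i j) * v j 0.
Proof.
rewrite /qf [LHS]mxE; apply: eq_bigr => j _; congr (_ * _).
by rewrite mxE; apply: eq_bigr => i _; rewrite mxE.
Qed.

Lemma meas_qfphi (M : 'M[R]_dim) a : measurable_fun setT (fun x => qf M (phi x a)).
Proof.
have -> : (fun x => qf M (phi x a)) = (fun x => \sum_j ((\sum_i phi x a i 0 * M i j) * phi x a j 0)).
  by apply/funext => x; rewrite qf_sumE.
apply: measurable_sum => j; apply: measurable_funM => //.
apply: measurable_sum => i; apply: measurable_funM => //; exact: measurable_cst.
Qed.

Lemma meas_sqrt : measurable_fun setT (@Num.sqrt R).
Proof. exact: continuous_measurable_fun (@sqrt_continuous R). Qed.

Lemma meas_bonus k h a : measurable_fun setT (fun x => bonus phi 1 xs acts k h x a).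
Proof.
rewrite /bonus /mxnorm.
exact: (measurableT_comp meas_sqrt (meas_qfphi _ a)).
Qed.

Lemma meas_Qalg j k h Vn a :
  measurable_fun setT (fun x => Qalg phi H 1 beta xs acts j k h Vn x a).
Proof.
rewrite /Qalg; apply: measurable_minr; last exact: measurable_cst.
apply: measurable_funD; first exact: meas_dotphi.
apply: measurable_funM; [exact: measurable_cst | exact: meas_bonus].
Qed.

Variable a0 : A.

Lemma meas_softmax (Y : R) (Qr Qg : S -> A -> R) a :
  (forall bb, measurable_fun setT (fun x => Qr x bb)) ->
  (forall bb, measurable_fun setT (fun x => Qg x bb)) ->
  measurable_fun setT (fun x => softmax alpha Y Qr Qg x a).
Proof.
move=> mr mg.
set e := fun x bb => expR (alpha * (Qr x bb + Y * Qg x bb)).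
have me : forall bb, measurable_fun setT (fun x => e x bb).
  move=> bb; apply: (measurableT_comp (@measurable_expR R)).
  apply: measurable_funM; first exact: measurable_cst.
  apply: measurable_funD => //; apply: measurable_funM => //; exact: measurable_cst.
have Spos : forall x, 0 < \sum_bb e x bb.
  move=> x; rewrite (bigD1 a0) //=.
  have := expR_gt0 (alpha * (Qr x a0 + Y * Qg x a0)).
  have : 0 <= \sum_(i | i != a0) e x i by apply: sumr_ge0 => i _; exact: expR_ge0.
  rewrite /e; lra.
have -> : (fun x => softmax alpha Y Qr Qg x a) = (fun x => e x a * expR (- ln (\sum_bb e x bb))).
  apply/funext => x; rewrite /softmax -/(e x a) expRN lnK //.
  by rewrite posrE.
apply: measurable_funM => //; apply: (measurableT_comp (@measurable_expR R)).
apply: measurableT_comp => //; apply: (measurableT_comp (@measurable_ln R)).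
exact: measurable_sum.
Qed.

Hypothesis hrng : forall h, (1 <= h <= H)%N -> forall x a,
     0 <= rw h x a <= 1 /\ 0 <= ut h x a <= 1.

Local Notation Yk k := (Yseq phi rw ut H 1 beta alpha eta b xi x1 xs acts k.-1).
Local Notation Qa := (Qalg phi H 1 beta xs acts).

Lemma Vk_step k h jr : (h <= H)%N ->
  Vk' k h jr = fun x => \sum_a softmax alpha (Yk k) (Qa rw k h (Vk' k h.+1 true))
      (Qa ut k h (Vk' k h.+1 false)) x a * Qa (jfun rw ut jr) k h (Vk' k h.+1 jr) x a.
Proof.
move=> hH; rewrite /Vk /algV.
have -> : (H.+1 - h = (H.+1 - h.+1).+1)%N by rewrite subSS subSn.
by case: jr.
Qed.

Lemma Vk_end k jr : Vk' k H.+1 jr = fun _ => 0.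
Proof. by rewrite /Vk /algV subnn; case: jr. Qed.

Lemma ratio_le1 (x : R) : 0 <= x -> x / x <= 1.
Proof.
move=> x0; have [->|xn] := eqVneq x 0; first by rewrite mul0r.
by rewrite divff.
Qed.

Lemma jfun_ge0 jr h x a : (1 <= h <= H)%N -> 0 <= jfun rw ut jr h x a.
Proof. by move=> hh; case: jr; have [/andP[? _] /andP[? _]] := hrng h hh x a. Qed.

Lemma PV_ge0 h V x a : (forall y, 0 <= V y) -> 0 <= PV P h V x a.
Proof. by move=> V0; exact: (Ig_ge0 (P h x a) V V0). Qed.

Lemma Vk_good k : (1 <= k <= K)%N -> forall n h, (h + n = H.+1)%N -> (1 <= h)%N ->
  forall jr, measurable_fun setT (Vk' k h jr) /\ forall y, 0 <= Vk' k h jr y <= H%:R.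
Proof.
move=> hk; elim=> [|n IH] h hn h1 jr.
  rewrite addn0 in hn; subst h; rewrite Vk_end; split; first exact: measurable_cst.
  by move=> y; rewrite lexx ler0n.
have hH : (h <= H)%N by lia.
have hh : (1 <= h <= H)%N by rewrite h1 hH.
have IH' := IH h.+1 (ltac:(lia)) isT.
have Qgood : forall jr', (forall a, measurable_fun setT (fun x => Qa (jfun rw ut jr') k h (Vk' k h.+1 jr') x a))
    /\ forall x a, 0 <= Qa (jfun rw ut jr') k h (Vk' k h.+1 jr') x a <= H%:R.
  move=> jr'; split => [a|x a]; first exact: meas_Qalg.
  have [mV bV] := IH' jr'.
  have bV' : forall y, `|Vk' k h.+1 jr' y| <= H%:R.
    by move=> y; have /andP[v0 v1] := bV y; rewrite ger0_norm.
  have [D [eD hD]] := core k h jr' hk hh mV bV' x a.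
  rewrite /Qalg dotvC.
  have -> : wvec phi 1 xs acts (jfun rw ut jr') k h (Vk' k h.+1 jr') = wk' k h jr' by [].
  rewrite eD le_min ge_min lexx orbT andbT ler0n andbT.
  have := jfun_ge0 jr' h x a hh.
  have := PV_ge0 h (Vk' k h.+1 jr') x a (fun y => proj1 (andP (bV y))).
  have := ler_norm (- D); rewrite normrN.
  move: hD; set bo := bonus _ _ _ _ _ _ _ _; lra.
have [mQr bQr] := Qgood true.
have [mQg bQg] := Qgood false.
have [mQj bQj] := Qgood jr.
rewrite Vk_step //; split.
  apply: measurable_sum => a; apply: measurable_funM => //.
  exact: meas_softmax.
move=> y.
set pol := softmax alpha (Yk k) _ _ y.
have pol0 : forall a, 0 <= pol a.
  by move=> a; rewrite /pol /softmax divr_ge0 // ?expR_ge0 // sumr_ge0 // => i _; rewrite expR_ge0.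
have polsum : \sum_a pol a <= 1.
  rewrite /pol /softmax -mulr_suml; apply: ratio_le1.
  by apply: sumr_ge0 => i _; rewrite expR_ge0.
apply/andP; split.
  by apply: sumr_ge0 => a _; rewrite mulr_ge0 //; have /andP[] := bQj y a.
apply: le_trans (_ : \sum_a pol a * H%:R <= _).
  apply: ler_sum => a _; apply: ler_wpM2l => //; by have /andP[] := bQj y a.
by rewrite -mulr_suml; apply: ler_piMl => //; rewrite ler0n.
Qed.

Lemma PV_le (h : nat) (V : S -> R) (x : S) (a : A) (Bd : R) : measurable_fun setT V -> (forall y, 0 <= V y <= Bd) ->
  PV P h V x a <= Bd.
Proof.
move=> mV bV.
have hb : forall y, `|V y| <= Bd by move=> y; have /andP[v0 v1] := bV y; rewrite ger0_norm.
have hc : forall y : S, `|Bd| <= `|Bd| by [].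
have h0 : forall y, 0 <= Bd - V y by move=> y; have /andP[_ v1] := bV y; rewrite subr_ge0.
have := Ig_ge0 (P h x a) (fun y => Bd - V y) h0.
rewrite (Ig_sub (finP h x a) (fun _ => Bd) V `|Bd| Bd (measurable_cst _) hc mV hb).
have -> : Ig (P h x a) (fun _ => Bd) = Bd.
  rewrite Ig_cst; last exact: finP.
  suff -> : ((P h x a : {measure set S -> \bar R}) setT) = 1%E by rewrite mulr1.
  exact: probability_setT.
by rewrite subr_ge0.
Qed.

Variable pi : nat -> S -> A -> R.
Hypothesis hpi : is_policy H pi.

Lemma jlin_ex jr h : (1 <= h <= H)%N -> exists t : 'cV[R]_dim,
  forall y a', jfun rw ut jr h y a' = dotv (phi y a') t.
Proof.
move=> hh; have [th [tg [_ _ hlin]]] := hth h hh.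
exists (if jr then th else tg) => y a'; rewrite /jfun; case: (jr); by have [] := hlin y a'.
Qed.

Lemma Vpol_good jr : forall n h, (h + n = H.+1)%N -> (1 <= h)%N ->
  measurable_fun setT (Vpol_aux P pi (jfun rw ut jr) n h) /\
  forall y, 0 <= Vpol_aux P pi (jfun rw ut jr) n h y <= n%:R.
Proof.
elim=> [|n IH] h hn h1.
  by split => [|y] /=; [exact: measurable_cst | rewrite lexx].
have hh : (1 <= h <= H)%N by apply/andP; split => //; lia.
have [mV bV] := IH h.+1 (ltac:(lia)) isT.
have [pi0 pi1 mpi] := hpi h hh.
have bV' : forall y, `|Vpol_aux P pi (jfun rw ut jr) n h.+1 y| <= n%:R.
  by move=> y; have /andP[v0 v1] := bV y; rewrite ger0_norm.
have [t jl] := jlin_ex jr h hh.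
have mq : forall a, measurable_fun setT (fun x => jfun rw ut jr h x a + PV P h (Vpol_aux P pi (jfun rw ut jr) n h.+1) x a).
  move=> a; apply: measurable_funD.
    have -> : (fun x => jfun rw ut jr h x a) = (fun x => dotv t (phi x a)).
      by apply/funext => x; rewrite jl dotvC.
    exact: meas_dotphi.
  have -> : (fun x => PV P h (Vpol_aux P pi (jfun rw ut jr) n h.+1) x a) =
      (fun x => dotv (sint mup mun h (Vpol_aux P pi (jfun rw ut jr) n h.+1)) (phi x a)).
    by apply/funext => x; rewrite (PV_ident h hh _ _ mV bV') dotvC.
  exact: meas_dotphi.
have bq : forall x a, 0 <= jfun rw ut jr h x a + PV P h (Vpol_aux P pi (jfun rw ut jr) n h.+1) x a <= n.+1%:R.
  move=> x a; have j0 := jfun_ge0 jr h x a hh.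
  have j1 : jfun rw ut jr h x a <= 1 by case: (jr); have [/andP[_ ?] /andP[_ ?]] := hrng h hh x a.
  have p0 := PV_ge0 h _ x a (fun y => proj1 (andP (bV y))).
  have p1 := PV_le h _ x a _ mV bV.
  rewrite -[n.+1]addn1 natrD; lra.
split.
  apply: measurable_sum => a; apply: measurable_funM => //; exact: mpi.
move=> y /=; apply/andP; split.
  by apply: sumr_ge0 => a _; rewrite mulr_ge0 //; have /andP[] := bq y a.
apply: le_trans (_ : \sum_a pi h y a * n.+1%:R <= _).
  apply: ler_sum => a _; apply: ler_wpM2l => //; by have /andP[] := bq y a.
by rewrite -mulr_suml pi1 mul1r.
Qed.

Lemma final x a k h jr : (1 <= k <= K)%N -> (1 <= h <= H)%N ->
  exists Delta : R,
    dotv (phi x a) (wk' k h jr) - Qpol P pi (jfun rw ut jr) H h x a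
    = PV P h (fun y => Vk' k h.+1 jr y - Vpol P pi (jfun rw ut jr) H h.+1 y) x a + Delta
    /\ `|Delta| <= beta * bonus phi 1 xs acts k h x a.
Proof.
move=> hk hh.
have [mV bV] := Vk_good k hk (H - h) h.+1 (ltac:(lia)) isT jr.
have bV' : forall y, `|Vk' k h.+1 jr y| <= H%:R.
  by move=> y; have /andP[v0 v1] := bV y; rewrite ger0_norm.
have [mW bW] := Vpol_good jr (H.+1 - h.+1) h.+1 (ltac:(lia)) isT.
have bW' : forall y, `|Vpol P pi (jfun rw ut jr) H h.+1 y| <= (H.+1 - h.+1)%:R.
  by move=> y; have /andP[v0 v1] := bW y; rewrite ger0_norm.
have [D [eD hD]] := core k h jr hk hh mV bV' x a.
exists D; split => //.
change (PV P h (fun y => Vk' k h.+1 jr y - Vpol P pi (jfun rw ut jr) H h.+1 y) x a)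
  with (Ig (P h x a) (fun y => Vk' k h.+1 jr y - Vpol P pi (jfun rw ut jr) H h.+1 y)).
rewrite (Ig_sub (finP h x a) _ _ _ _ mV bV' mW bW') eD /Qpol.
rewrite /PV /Ig; ring.
Qed.

End Main.


Theorem lemma9 (R : realType) (C2 : R) (hC2 : 0 < C2) :
  exists C1 : R, 0 < C1 /\
  forall (dS : measure_display) (S : measurableType dS) (A : finType)
    (dim H K : nat) (phi : S -> A -> 'cV[R]_dim)
    (P : @kernel_t R dS S A) (mup mun : @fmeas_t R dS S dim)
    (rw ut : nat -> S -> A -> R) (x1 : S) (b gamma eta p : R)
    (xs : nat -> nat -> S) (acts : nat -> nat -> A)
    (pi : nat -> S -> A -> R),
  (2 <= #|A|)%N -> (0 < dim)%N -> (0 < H)%N -> (0 < K)%N ->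
  (* linear MDP: features *)
  (forall x a, normv (phi x a) <= 1) ->
  (forall a (i : 'I_dim), measurable_fun setT (fun x => phi x a i 0)) ->
  (* P_h(dx'|x,a) = <phi(x,a), mu_h(dx')> *)
  (forall h, (1 <= h <= H)%N -> forall x a (B : set S), measurable B ->
     P h x a B = (dotv (phi x a) (\col_i smeas mup mun h i B))%:E) ->
  (* || int f d mu_h || <= sqrt d sup |f| *)
  (forall h, (1 <= h <= H)%N -> forall (f : S -> R) (M : R),
     measurable_fun setT f -> (forall y, `|f y| <= M) ->
     normv (sint mup mun h f) <= Num.sqrt dim%:R * M) ->
  (* deterministic reward / utility in [0,1], linear in phi *)
  (forall h, (1 <= h <= H)%N -> forall x a,
     0 <= rw h x a <= 1 /\ 0 <= ut h x a <= 1) ->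
  (forall x a, rw H.+1 x a = 0 /\ ut H.+1 x a = 0) ->
  (forall h, (1 <= h <= H)%N -> exists th tg : 'cV[R]_dim,
     [/\ normv th <= Num.sqrt dim%:R, normv tg <= Num.sqrt dim%:R &
         forall x a, rw h x a = dotv (phi x a) th /\ ut h x a = dotv (phi x a) tg]) ->
  (* constraint threshold and Slater's condition *)
  0 < b <= H%:R ->
  0 < gamma ->
  (exists pib, is_policy H pib /\ b + gamma <= Vpol P pib ut H 1 x1) ->
  0 < eta -> 0 < p < 1 ->
  (* the data: episodes start from x1 *)
  (forall tau, xs tau 1%N = x1) ->
  (* the fixed comparison policy *)
  is_policy H pi ->
  let T : R := (K * H)%:R in
  let xi : R := 2 * H%:R / gamma in
  let iota : R := ln (4 * ln #|A|%:R * dim%:R * T / p) in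
  let chi : R := ln (4 * (C1 + 1) * ln #|A|%:R * dim%:R * T / p) in
  let beta : R := C1 * dim%:R * H%:R * Num.sqrt iota in
  let lam : R := 1 in
  let alpha : R := ln #|A|%:R * K%:R / (2 * (1 + xi + H%:R)) in
  event_E phi rw ut H lam beta alpha eta b xi x1 xs acts P K
    (C2 * dim%:R * H%:R * Num.sqrt chi) ->
  forall (x : S) (a : A) (k h : nat) (jr : bool),
    (1 <= k <= K)%N -> (1 <= h <= H)%N ->
  exists Delta : R,
    dotv (phi x a) (wk phi rw ut H lam beta alpha eta b xi x1 xs acts k h jr)
      - Qpol P pi (jfun rw ut jr) H h x a
    = PV P h (fun y => Vk phi rw ut H lam beta alpha eta b xi x1 xs acts k h.+1 jr y
                       - Vpol P pi (jfun rw ut jr) H h.+1 y) x a + Delta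
    /\ `|Delta| <= beta * bonus phi lam xs acts k h x a.
Proof.
have le_mul1 : forall x y : R, 0 <= x -> 1 <= y -> x <= x * y.
  by move=> x y x0 y1; rewrite -{1}(mulr1 x) ler_wpM2l.
exists ((2 * C2 + 3) ^+ 2); split.
  by rewrite exprn_gt0 //; lra.
move=> dS S A dim H K phi P mup mun rw ut x1 b gamma eta p xs acts pi
  hA hd hH hK hnorm hmeas hPl hsint hrng hend hth hb hgamma hslater heta hp hxs hpi
  T xi iota chi beta lam alpha hE x a k h jr hk hh.
have [a0 _] : exists a0 : A, true.
  have : (0 < #|A|)%N by lia.
  by case/card_gt0P => a0 _; exists a0.
set X := 4 * ln #|A|%:R * dim%:R * T / p.
have hX : 2 <= X.
  have lnA : 1/2 <= ln (#|A|%:R : R).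
    have A2 : (2:R) <= #|A|%:R by rewrite ler_nat.
    apply: le_trans ln2_ge _; rewrite ler_ln ?posrE //; lra.
  have d1 : 1 <= (dim%:R : R) by rewrite ler1n.
  have T1 : 1 <= T by rewrite /T ler1n muln_gt0 hK hH.
  have Y2 : 2 <= 4 * ln #|A|%:R * dim%:R * T.
    have e1 : 2 <= 4 * ln (#|A|%:R : R) by lra.
    have e2 : 2 <= 4 * ln (#|A|%:R : R) * dim%:R.
      by apply: (le_trans e1); apply: le_mul1; [apply: (le_trans _ e1); lra | exact: d1].
    by apply: (le_trans e2); apply: le_mul1; [apply: (le_trans _ e2); lra | exact: T1].
  have /andP[p0 p1] := hp.
  rewrite /X; apply: (le_trans Y2); apply: le_mul1; first by apply: (le_trans _ Y2); lra.
  by rewrite invf_ge1 // ltW.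
have hchi : chi = ln (((2 * C2 + 3) ^+ 2 + 1) * X) by rewrite /chi /X; congr ln; ring.
have hbeta : C2 * dim%:R * H%:R * Num.sqrt chi + Num.sqrt dim%:R * (1 + H%:R) <= beta.
  rewrite /beta hchi /iota -/X.
  apply: const_bound => //; [by rewrite ler1n | by rewrite ler1n].
exact: (final H K phi P mup mun rw ut x1 beta alpha eta b xi xs acts _
  hmeas hPl hsint hth hE hbeta a0 hrng pi hpi x a k h jr hk hh).
Qed.
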